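(* Every sequentially distorted subset of a group is strongly bounded.
   Context: A subset $A$ of a group $G$ is sequentially distorted if there is a sequence $(w_n)_{n\in\mathbb N}\subset\mathbb N$ such that for every sequence $(a_n)_{n\in\mathbb N}\subset A$ there is a finite subset $S\subset G$ with $a_n\in S^{w_n}$ for all $n$, where $S^k=\{s_1\cdots s_k: s_i\in S\}$. A subset of $G$ is strongly bounded if it has finite diameter with respect to every left-invariant metric on $G$. *)

(* Defs.v *)
From Stdlib Require Import Reals List.
Import ListNotations.
Open Scope R_scope.

Record is_group {G : Type} (mul : G -> G -> G) (e : G) (inv : G -> G) : Prop := {
  grp_assoc : forall x y z, mul x (mul y z) = mul (mul x y) z;
  grp_id_l  : forall x, mul e x = x;
  grp_id_r  : forall x, mul x e = x;
  grp_inv_l : forall x, mul (inv x) x = e;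
  grp_inv_r : forall x, mul x (inv x) = e
}.

Definition list_prod {G : Type} (mul : G -> G -> G) (e : G) (l : list G) : G :=
  fold_right mul e l.

(* g ∈ S^k, for a finite subset S of G given as a list:
   g = s_1 ⋯ s_k with each s_i ∈ S. *)
Definition in_power {G : Type} (mul : G -> G -> G) (e : G)
  (S : list G) (k : nat) (g : G) : Prop :=
  exists l : list G, length l = k /\ (forall s, In s l -> In s S) /\
                     g = list_prod mul e l.

Definition seq_distorted {G : Type} (mul : G -> G -> G) (e : G) (A : G -> Prop) : Prop :=
  exists w : nat -> nat,
    forall a : nat -> G, (forall n, A (a n)) ->
      exists S : list G, forall n, in_power mul e S (w n) (a n).

Definition left_inv_metric {G : Type} (mul : G -> G -> G) (d : G -> G -> R) : Prop :=
  (forall x y, 0 <= d x y) /\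
  (forall x y, d x y = 0 <-> x = y) /\
  (forall x y, d x y = d y x) /\
  (forall x y z, d x z <= d x y + d y z) /\
  (forall g x y, d (mul g x) (mul g y) = d x y).

Definition strongly_bounded {G : Type} (mul : G -> G -> G) (A : G -> Prop) : Prop :=
  forall d : G -> G -> R, left_inv_metric mul d ->
    exists M : R, forall x y, A x -> A y -> d x y <= M.

(* Main.v *)
Require Import Defs.
From Stdlib Require Import Reals List.
From Stdlib Require Import Classical ClassicalEpsilon Lra Lia.
Import ListNotations.
Open Scope R_scope.

Definition sumd {G : Type} (d : G -> G -> R) (e : G) (S : list G) : R :=
  fold_right (fun s acc => d e s + acc) 0 S.

Lemma sumd_ge {G : Type} (d : G -> G -> R) (e : G) (S : list G) :
  (forall x y, 0 <= d x y) -> forall s, In s S -> d e s <= sumd d e S.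
Proof.
  intros H0; induction S as [|t S IH]; simpl; [tauto|].
  intros s [<-|Hs].
  - assert (0 <= sumd d e S).
    { clear IH. induction S; simpl; [lra|]. specialize (H0 e a). lra. }
    lra.
  - specialize (IH s Hs). specialize (H0 e t). lra.
Qed.

Lemma sumd_nonneg {G : Type} (d : G -> G -> R) (e : G) (S : list G) :
  (forall x y, 0 <= d x y) -> 0 <= sumd d e S.
Proof. intros H0; induction S; simpl; [lra|]. specialize (H0 e a). lra. Qed.

Lemma prod_bound {G : Type} (mul : G -> G -> G) (e : G) (d : G -> G -> R)
  (Hd : left_inv_metric mul d) (HG : forall x, mul x e = x) (C : R) (S : list G) :
  (forall s, In s S -> d e s <= C) ->
  forall l, (forall s, In s l -> In s S) ->
  d e (Defs.list_prod mul e l) <= INR (length l) * C.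
Proof.
  destruct Hd as [H0 [H1 [H2 [H3 H4]]]].
  intros HC; induction l as [|s l IH]; intros Hl; simpl.
  - assert (d e e = 0) by (apply H1; reflexivity). lra.
  - unfold Defs.list_prod in *; simpl.
    assert (Hs : d e s <= C) by (apply HC, Hl; simpl; auto).
    assert (IH' := IH (fun x Hx => Hl x (or_intror Hx))).
    assert (Ht := H3 e s (mul s (fold_right mul e l))).
    assert (Hq := H4 s e (fold_right mul e l)). rewrite HG in Hq.
    idtac.
    replace (match length l with | 0%nat => 1 | Datatypes.S _ => INR (length l) + 1 end) with (INR (length l) + 1) by (destruct (length l); simpl; lra). nra.
Qed.

Theorem lemma3p3 (G : Type) (mul : G -> G -> G) (e : G) (inv : G -> G)
  (HG : is_group mul e inv) (A : G -> Prop) :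
  seq_distorted mul e A -> strongly_bounded mul A.
Proof.
  intros [w Hw] d Hd.
  destruct (classic (exists n : nat, forall a, A a -> d e a <= INR n * (INR (w n) + 1)))
    as [[n Hn] | Hno].
  - exists (2 * (INR n * (INR (w n) + 1))). intros x y Hx Hy.
    destruct Hd as [H0 [H1 [H2 [H3 H4]]]].
    assert (T := H3 x e y). rewrite (H2 x e) in T.
    pose proof (Hn x Hx). pose proof (Hn y Hy). lra.
  - assert (Hex : forall n : nat, exists a, A a /\ INR n * (INR (w n) + 1) < d e a).
    { intro n. apply NNPP. intro Hc. apply Hno. exists n. intros a Ha.
      apply Rnot_lt_le. intro Hl. apply Hc. exists a. auto. }
    pose (a := fun n => proj1_sig (constructive_indefinite_description _ (Hex n))).
    assert (Ha : forall n, A (a n) /\ INR n * (INR (w n) + 1) < d e (a n)).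
    { intro n. unfold a. destruct (constructive_indefinite_description _ (Hex n)). exact a0. }
    destruct (Hw a (fun n => proj1 (Ha n))) as [S HS].
    assert (H0 : forall x y, 0 <= d x y) by apply Hd.
    pose (C := sumd d e S).
    assert (HC0 : 0 <= C) by (apply sumd_nonneg; auto).
    destruct (INR_archimed 1 C) as [n Hn]; [lra|].
    destruct (HS n) as [l [Hlen [Hin Heq]]].
    assert (B := prod_bound mul e d Hd (grp_id_r _ _ _ HG) C S
                   (sumd_ge d e S H0) l Hin).
    rewrite <- Heq, Hlen in B.
    destruct (Ha n) as [_ Hb].
    assert (0 <= INR (w n)) by apply pos_INR.
    nra.
Qed.
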